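(* Let $T$ be a string, let $1\le j\le |T|$, $1\le i\le j+1$, let $w$ be a string, and let $L=T[1..i-1]$, $R=T[j+1..|T|]$ and $T'=LwR$. Assume $|L|\ge |R|$, $|w|\le |L|/2$, and that the longest border of $Lw$ is longer than $|w|$. Partition the set of borders of $Lw$ into groups $G_1,\dots,G_m$ so that two borders lie in the same group iff they have the same smallest period, and let $p_k$ be the common smallest period of the borders in $G_k$. Assume that $T'$ has a border longer than $R$, and let $b^\star$ be the border of $Lw$ such that $b^\star R$ is the longest border of $T'$; let $k^\star$ be the index of the group containing $b^\star$. Let $\alpha_{k^\star}$ be the exponent of the longest prefix of $T'$ having period $p_{k^\star}$, and let $r_{k^\star}=\mathit{lce}_{T'}(|T'|-|R|-p_{k^\star}+1,\ |T'|-|R|+1)$. If $b^\star$ is periodic and $p_{k^\star}\ne\mathsf{per}(b^\star R)$, then $|b^\star|=\alpha_{k^\star}p_{k^\star}-r_{k^\star}$.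
   Context: $S[i..j]$ denotes the factor of $S$ from position $i$ to $j$ (empty if $i>j$). A border of a nonempty string $S$ is a string that is both a proper prefix and a proper suffix of $S$. If $S$ has a border $b$ then $|S|-|b|$ is a period of $S$; $\mathsf{per}(S)$ is the smallest period of $S$. The exponent of $S$ is $|S|/\mathsf{per}(S)$; $S$ is periodic if $\mathsf{per}(S)\le|S|/2$. For a string $S$ and positions $a,b$, $\mathit{lce}_S(a,b)$ is the length of the longest common prefix of $S[a..|S|]$ and $S[b..|S|]$. *)

(* Defs.v *)
(* Strings are sequences over an arbitrary eqType alphabet.
   Positions in the paper are 1-based; we translate explicitly. *)
From mathcomp Require Import all_boot all_order all_algebra.
Set Implicit Arguments. Unset Strict Implicit. Unset Printing Implicit Defensive.

Section Strings.
Variable A : eqType.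
Implicit Types (S b : seq A).

Definition is_border S b : bool :=
  [&& size b < size S, prefix b S & suffix b S].

Definition is_period S (p : nat) : bool :=
  (0 < p <= size S) &&
  [forall i : 'I_(size S), (i + p < size S) ==>
      (nth None (map Some S) i == nth None (map Some S) (i + p))].

(* smallest period of S (|S| is a period of any nonempty S, so for
   nonempty S this is the minimum; per [::] = 0 is an irrelevant junk value). *)
Definition per S : nat :=
  head (size S) [seq p <- iota 1 (size S) | is_period S p].

Definition periodic S : bool := 2 * per S <= size S.

Definition exponent S : rat := ((size S)%:R / (per S)%:R)%R.

Definition longest_prefix_with_period S (p : nat) : nat :=
  \max_(l < (size S).+1 | is_period (take l S) p) l.

Fixpoint lcp (s t : seq A) : nat :=
  match s, t with
  | x :: s', y :: t' => if x == y then (lcp s' t').+1 else 0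
  | _, _ => 0
  end.

(* lce_S(a,b) with 1-based positions a, b: lcp of S[a..|S|] and S[b..|S|] *)
Definition lce S (a b : nat) : nat := lcp (drop a.-1 S) (drop b.-1 S).
End Strings.

(* Main.v *)
Require Import Defs.
From mathcomp Require Import all_boot all_order all_algebra.
From mathcomp Require Import zify.
Set Implicit Arguments. Unset Strict Implicit.

Section H.
Variable A : eqType.
Definition ns (S : seq A) k := nth None (map Some S) k.

Lemma ns_cat s1 s2 k : ns (s1 ++ s2) k = if k < size s1 then ns s1 k else ns s2 (k - size s1).
Proof. by rewrite /ns map_cat nth_cat size_map. Qed.
Lemma ns_drop a s k : ns (drop a s) k = ns s (a + k).
Proof. by rewrite /ns map_drop nth_drop. Qed.
Lemma ns_take a s k : k < a -> ns (take a s) k = ns s k.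
Proof. by move=> H; rewrite /ns map_take nth_take. Qed.

Definition per_ok S q := forall k, k + q < size S -> ns S k = ns S (k + q).

Lemma is_periodP S q : is_period S q <-> (0 < q <= size S /\ per_ok S q).
Proof.
rewrite /is_period; split.
  move/andP=> [H /forallP F]; split=> // k Hk.
  have Hk' : k < size S by lia.
  by move: (F (Ordinal Hk')) => /= /implyP /(_ Hk) /eqP.
move=> [H F]; apply/andP; split=> //; apply/forallP=> x; apply/implyP=> Hx.
by apply/eqP; apply: F.
Qed.

Lemma hfi (P : pred nat) d n m : (exists2 q, m <= q < m + n & P q) ->
  let h := head d [seq x <- iota m n | P x] in
  [/\ m <= h < m + n, P h & forall q, m <= q < m + n -> P q -> h <= q].
Proof.
elim: n m => [|n IH] m [q Hq Pq]; first by lia.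
rewrite /=. case Pm: (P m) => /=.
  split=> //; first lia. by move=> q' Hq' _; lia.
have Hq2 : m.+1 <= q < m.+1 + n.
  have : q != m by apply/eqP => E; rewrite E Pm in Pq.
  lia.
have [H1 H2 H3] := IH m.+1 (ex_intro2 _ _ q Hq2 Pq).
split=> //; first lia.
move=> q' Hq' Pq'. have : q' != m by apply/eqP => E; rewrite E Pm in Pq'.
move=> Hne; apply: H3 => //; lia.
Qed.

Lemma per_facts S : 0 < size S ->
  [/\ 0 < per S <= size S, per_ok S (per S) &
      forall q, 0 < q <= size S -> per_ok S q -> per S <= q].
Proof.
move=> HS.
have ex : exists2 q, 1 <= q < 1 + size S & is_period S q.
  exists (size S); first lia.
  apply/is_periodP; split; first lia. move=> k Hk; lia.
have [H1 H2 H3] := hfi (size S) ex.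
rewrite /per; move/is_periodP: H2 => [H2 H2'].
split=> // q Hq Pq; apply: H3; first lia.
by apply/is_periodP.
Qed.

Lemma per_ok_restr S S' q : size S' <= size S ->
  (forall k, k < size S' -> ns S' k = ns S k) -> per_ok S q -> per_ok S' q.
Proof.
move=> Hs E P k Hk; rewrite !E; try lia. apply: P; lia.
Qed.

Lemma lcp_le (s t : seq A) : lcp s t <= size t.
Proof.
elim: s t => [|x s IH] [|y t] //=. case: (x == y) => //. by have := IH t.
Qed.

Lemma lcp_eq (s t : seq A) k : k < lcp s t -> ns s k = ns t k.
Proof.
elim: s t k => [|x s IH] [|y t] k //=. case: eqP => // -> .
case: k => [|k] //= Hk. by apply: IH.
Qed.

Lemma lcp_neq (s t : seq A) : lcp s t < size s -> lcp s t < size t ->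
  ns s (lcp s t) <> ns t (lcp s t).
Proof.
elim: s t => [|x s IH] [|y t] //=. case: eqP => [->|Hne] /=.
  move=> H1 H2; exact: IH.
by move=> _ _ [].
Qed.
End H.
Theorem lemma10 (A : eqType) (T w bstar : seq A) (i j : nat) :
  1 <= j <= size T ->
  1 <= i <= j.+1 ->
  let L := take i.-1 T in          (* L = T[1..i-1] *)
  let R := drop j T in             (* R = T[j+1..|T|] *)
  let T' := L ++ w ++ R in
  size R <= size L ->
  2 * size w <= size L ->
  (* the longest border of Lw is longer than |w| *)
  (exists b, is_border (L ++ w) b && (size w < size b)) ->
  (* T' has a border longer than R *)
  (exists b, is_border T' b && (size R < size b)) ->
  (* b* is a border of Lw such that b* R is the longest border of T' *)
  is_border (L ++ w) bstar ->
  is_border T' (bstar ++ R) ->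
  (forall b, is_border T' b -> size b <= size (bstar ++ R)) ->
  (* p_{k*} : the common smallest period of the group containing b* *)
  let p := per bstar in
  let alpha := exponent (take (longest_prefix_with_period T' p) T') in
  let r := lce T' (size T' - size R - p + 1) (size T' - size R + 1) in
  periodic bstar ->
  p <> per (bstar ++ R) ->
  ((size bstar)%:R = alpha * p%:R - r%:R :> rat)%R.
Proof.
move=> _ _ L R T' _ _ _ [b1 Hb1] HbLw HbT Hmax p alpha r _ Hpne.
set n := size (L ++ w); set m := size bstar; set s := size R.
have sT : size T' = n + s by rewrite /T' catA size_cat.
have m_pos : 0 < m.
  move/andP: Hb1 => [Bb1 Hs]; have := Hmax _ Bb1; rewrite size_cat -/m -/s; lia.
have mn : m < n by case/and3P: HbLw.
move: HbT => /and3P [_ Hpre Hsuf].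
pose f := ns (bstar ++ R).
have F1 : forall k, k < m + s -> ns T' k = f k.
  move=> k Hk; case/prefixP: Hpre => u Eu; rewrite Eu ns_cat size_cat -/m -/s.
  by rewrite Hk.
have F2 : forall k, ns T' (n - m + k) = f k.
  move=> k; case/suffixP: Hsuf => v Ev.
  have sv : size v = n - m by move: (congr1 size Ev); rewrite sT !size_cat -/m -/s; lia.
  by rewrite Ev ns_cat sv ltnNge leq_addr /= addKn.
have Fb : forall k, k < m -> f k = ns bstar k.
  by move=> k Hk; rewrite /f ns_cat -/m Hk.
have [Hp1 Pb Pmin] := per_facts m_pos.
rewrite -/p in Hp1 Pb Pmin.
pose rr := lcp (drop (n - p) T') (drop n T').
have Er : r = rr.
  rewrite /r /lce sT /rr. congr lcp; congr drop; lia.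
have rr_le : rr <= s by rewrite /rr; have := lcp_le (drop (n - p) T') (drop n T'); rewrite size_drop sT; lia.
have Leq : forall k, k < rr -> f (m - p + k) = f (m + k).
  move=> k Hk; have := lcp_eq Hk; rewrite !ns_drop.
  have -> : n - p + k = n - m + (m - p + k) by lia.
  have -> : n + k = n - m + (m + k) by lia.
  by rewrite !F2.
have Q : forall k, k + p < m + rr -> f k = f (k + p).
  move=> k Hk; case: (ltnP (k + p) m) => Hkm.
    rewrite !Fb; try lia. apply: Pb; lia.
  have := Leq (k + p - m); have -> : m - p + (k + p - m) = k by lia.
  have -> : m + (k + p - m) = k + p by lia.
  apply; lia.
have rr_lt : rr < s.
  rewrite ltn_neqAle rr_le andbT; apply/eqP => E; apply: Hpne.
  have sbR : size (bstar ++ R) = m + s by rewrite size_cat.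
  have PbR : per_ok (bstar ++ R) p by move=> k; rewrite sbR -E; apply: Q.
  have nz : 0 < size (bstar ++ R) by lia.
  have [Hq1 Pq Qmin] := per_facts nz.
  have qp : per (bstar ++ R) <= p by apply: Qmin => //; lia.
  apply/eqP; rewrite eqn_leq; apply/andP; split; last by [].
    apply: Pmin; first lia.
    apply: (per_ok_restr (S := bstar ++ R)) => //; first lia.
    by move=> k Hk; rewrite -Fb.
pose l0 := m + rr.
have l0T : l0 <= size T' by rewrite sT; lia.
have sP : size (take l0 T') = l0 by rewrite size_takel.
have Pl0 : per_ok (take l0 T') p.
  move=> k; rewrite sP => Hk.
  have -> : ns (take l0 T') k = f k by rewrite ns_take ?F1 //; lia.
  have -> : ns (take l0 T') (k + p) = f (k + p) by rewrite ns_take ?F1 //; lia.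
  by apply: Q.
have Hmaxl : longest_prefix_with_period T' p = l0.
  apply/eqP; rewrite eqn_leq; apply/andP; split.
    apply/bigmax_leqP => l Hl; rewrite leqNgt; apply/negP => Hlt.
    move/is_periodP: Hl => [_ Pl]. have lT := ltn_ord l.
    have sl : size (take l T') = l by rewrite size_takel; lia.
    have := Pl (l0 - p); rewrite sl. have -> : l0 - p + p = l0 by lia.
    move=> /(_ Hlt). rewrite ns_take; last lia. rewrite ns_take //.
    rewrite !F1; try lia.
    have := @lcp_neq _ (drop (n - p) T') (drop n T').
    rewrite -/rr !size_drop sT !ns_drop.
    have -> : n - p + rr = n - m + (m - p + rr) by lia.
    have -> : n + rr = n - m + (m + rr) by lia.
    rewrite !F2. have -> : l0 - p = m - p + rr by lia.
    move=> H E; apply: H; try lia. exact: E.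
  have Hl0 : l0 < (size T').+1 by lia.
  apply: (@leq_bigmax_cond _ _ (fun l : 'I_(size T').+1 => nat_of_ord l) (Ordinal Hl0)).
  by apply/is_periodP; rewrite sP; split=> //; lia.
have perP : per (take l0 T') = p.
  have nz : 0 < size (take l0 T') by rewrite sP; lia.
  have [H1 H2 H3] := per_facts nz.
  have qp : per (take l0 T') <= p by apply: H3 => //; rewrite sP; lia.
  apply/eqP; rewrite eqn_leq qp /=.
  apply: Pmin; first lia.
  apply: (per_ok_restr (S := take l0 T')) => //; first by rewrite sP; lia.
  by move=> k Hk; rewrite ns_take ?F1 -?Fb //; lia.
rewrite /alpha Hmaxl /exponent sP perP Er.
have pnz : (p%:R : rat) != 0%R by rewrite Num.Theory.pnatr_eq0 -lt0n; lia.
by rewrite GRing.mulfVK // /l0 GRing.natrD GRing.addrK.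
Qed.
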